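(* In the setting of the context, with $R(t)=-\frac{\gamma}{\beta}\log\varphi^{-1}(t)$, we have $R(\infty):=\lim_{t\to\infty}R(t)=\alpha$, \[ R(\infty)=N-\tilde S e^{(\beta/\gamma)\tilde R}e^{-(\beta/\gamma)R(\infty)}, \] and $R$ is increasing on $[0,\infty)$ with $\tilde R\le R(t)<\alpha=R(\infty)$ for all $t\ge0$.
   Context: Let $\beta,\gamma,\delta>0$ be constants and $\tilde S,\tilde E,\tilde I,\tilde R$ real numbers with $N:=\tilde S+\tilde E+\tilde I+\tilde R>0$. Standing assumptions: (A1) $\tilde I>0$; (A2) $\tilde E>(\gamma/\delta)\tilde I$; (A3) $\tilde S>\delta\tilde E/(\beta\tilde I)$; (A4) $\tilde R\ge 0$ and $N>\tilde S e^{(\beta/\gamma)\tilde R}+\tilde R$. Let $\alpha$ be the unique solution in $(\tilde R,N)$ of $x=N-\tilde S e^{(\beta/\gamma)\tilde R}e^{-(\beta/\gamma)x}$, and assume (A5) $\tilde S<(\gamma/\beta)e^{(\beta/\gamma)(\alpha-\tilde R)}$. Put $u_0:=e^{-(\beta/\gamma)\tilde R}$, $u_\infty:=e^{-(\beta/\gamma)\alpha}$. Let $\psi$ be the unique function, continuous and positive on $(u_\infty,u_0]$ and $C^1$ on $(u_\infty,u_0)$, satisfying $\psi'(u)\psi(u)-\frac{\gamma+\delta}{u}\psi(u)=-\delta\,\frac{\beta N-\beta\tilde S e^{(\beta/\gamma)\tilde R}u+\gamma\log u}{u}$ on $(u_\infty,u_0)$ and $\psi(u_0)=\beta\tilde I$.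 Let $\varphi(u):=\int_u^{u_0}\frac{d\xi}{\xi\psi(\xi)}$; $\varphi$ is a strictly decreasing continuous bijection from $(u_\infty,u_0]$ onto $[0,\infty)$, with inverse $\varphi^{-1}:[0,\infty)\to(u_\infty,u_0]$. *)

(* Defs.v *)
From Stdlib Require Import Reals.
From Coquelicot Require Import Coquelicot.
Open Scope R_scope.

Definition phi_of (psi : R -> R) (u0 u : R) : R :=
  RInt (fun xi => / (xi * psi xi)) u u0.

Definition Rsol (beta gamma : R) (phiinv : R -> R) (t : R) : R :=
  - (gamma / beta) * ln (phiinv t).

(* Main.v *)
Require Import Defs.
From Stdlib Require Import Reals Lra.
From Coquelicot Require Import Coquelicot.
Open Scope R_scope.

Lemma Rmin_cont (h : R -> R) (u0 z : R) : z <= u0 ->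
  (z < u0 -> continuous h z) ->
  (z = u0 -> filterlim h (at_left u0) (locally (h u0))) ->
  continuous (fun x => h (Rmin x u0)) z.
Proof.
intros Hz H1 H2.
destruct (Rle_lt_or_eq_dec _ _ Hz) as [Hlt|Heq].
- apply continuous_ext_loc with h; [|now apply H1].
  assert (He : 0 < u0 - z) by lra.
  exists (mkposreal _ He). intros y Hy.
  unfold ball in Hy; simpl in Hy; unfold AbsRing_ball, abs, minus, plus, opp in Hy; simpl in Hy.
  apply Rabs_lt_between in Hy. rewrite Rmin_left; [reflexivity|lra].
- subst z. specialize (H2 eq_refl).
  intros P HP. rewrite Rmin_left in HP by lra. specialize (H2 P HP).
  destruct H2 as [d Hd]. exists d. intros y Hy.
  destruct (Rlt_or_le y u0) as [Hy'|Hy'].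
  + rewrite Rmin_left by lra. now apply Hd.
  + rewrite Rmin_right by lra. now apply locally_singleton in HP.
Qed.

Section S.
Variables (psi : R -> R) (ui u0 : R).
Hypothesis hui : 0 < ui.
Hypothesis hpos : forall u, ui < u <= u0 -> 0 < psi u.
Hypothesis hcl : filterlim psi (at_left u0) (locally (psi u0)).
Hypothesis hc : forall u, ui < u < u0 -> continuous psi u.
Let f := fun xi => / (xi * psi xi).
Let g := fun x => / (Rmin x u0 * psi (Rmin x u0)).

Lemma g_cont z : ui < z <= u0 -> continuous g z.
Proof.
intros Hz. unfold g.
apply continuous_Rinv_comp.
- apply continuous_ext with (fun y => mult (Rmin y u0) (psi (Rmin y u0))); [reflexivity|].
  apply (@continuous_mult R_UniformSpace R_AbsRing).
  + apply (Rmin_cont (fun x => x)); [lra| intros; apply continuous_id|].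
    intros _ P HP. unfold filtermap, at_left, within. eapply filter_imp; [|exact HP]. auto.
  + apply Rmin_cont; [lra| intros; apply hc; lra|intros; exact hcl].
- rewrite Rmin_left by lra. specialize (hpos z Hz). nra.
Qed.

Lemma f_ex a b : ui < a <= b -> b <= u0 -> ex_RInt f a b.
Proof.
intros Ha Hb.
apply ex_RInt_ext with g.
- intros x Hx. rewrite Rmin_left in Hx by lra. rewrite Rmax_right in Hx by lra.
  unfold g, f. rewrite Rmin_left by lra. reflexivity.
- apply (@ex_RInt_continuous R_CompleteNormedModule). intros z Hz.
  rewrite Rmin_left in Hz by lra. rewrite Rmax_right in Hz by lra.
  apply g_cont; lra.
Qed.

Lemma f_pos a b : ui < a < b -> b <= u0 -> 0 < RInt f a b.
Proof.
intros Ha Hb.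
rewrite (RInt_ext f g).
- apply RInt_gt_0; [lra| |].
  + intros x Hx. unfold g. rewrite Rmin_left by lra.
    specialize (hpos x ltac:(lra)). apply Rinv_0_lt_compat; nra.
  + intros x Hx; apply g_cont; lra.
- intros x Hx. rewrite Rmin_left in Hx by lra. rewrite Rmax_right in Hx by lra.
  unfold g, f. rewrite Rmin_left by lra. reflexivity.
Qed.

Lemma phi_decr a b : ui < a < b -> b <= u0 -> RInt f b u0 < RInt f a u0.
Proof.
intros Ha Hb.
rewrite <- (RInt_Chasles f a b u0) by (apply f_ex; lra).
pose proof (f_pos a b Ha Hb). change (plus ?x ?y) with (x + y). lra.
Qed.
End S.
Theorem theorem7
  (beta gamma delta St Et It Rt alpha : R) (psi phiinv : R -> R)
  (hbeta : 0 < beta) (hgamma : 0 < gamma) (hdelta : 0 < delta)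
  (hN : 0 < St + Et + It + Rt)
  (A1 : 0 < It)
  (A2 : Et > (gamma / delta) * It)
  (A3 : St > delta * Et / (beta * It))
  (A4a : 0 <= Rt)
  (A4b : St + Et + It + Rt > St * exp ((beta / gamma) * Rt) + Rt)
  (* alpha: the solution in (Rt, N) of x = N - St e^{(beta/gamma)Rt} e^{-(beta/gamma)x} *)
  (halpha_int : Rt < alpha < St + Et + It + Rt)
  (halpha_eq : alpha = (St + Et + It + Rt)
                 - St * exp ((beta / gamma) * Rt) * exp (- (beta / gamma) * alpha))
  (A5 : St < (gamma / beta) * exp ((beta / gamma) * (alpha - Rt)))
  (* psi: continuous and positive on (u_inf, u0], C^1 on (u_inf, u0), solving the ODE *)
  (hpsi_pos : forall u, exp (- (beta / gamma) * alpha) < u <= exp (- (beta / gamma) * Rt) ->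
              0 < psi u)
  (hpsi_cont_u0 : filterlim psi (at_left (exp (- (beta / gamma) * Rt)))
                    (locally (psi (exp (- (beta / gamma) * Rt)))))
  (hpsi_C1 : forall u, exp (- (beta / gamma) * alpha) < u < exp (- (beta / gamma) * Rt) ->
             ex_derive psi u /\ continuous (Derive psi) u)
  (hpsi_ode : forall u, exp (- (beta / gamma) * alpha) < u < exp (- (beta / gamma) * Rt) ->
              Derive psi u * psi u - (gamma + delta) / u * psi u
              = - delta * (beta * (St + Et + It + Rt)
                           - beta * St * exp ((beta / gamma) * Rt) * u + gamma * ln u) / u)
  (hpsi_u0 : psi (exp (- (beta / gamma) * Rt)) = beta * It)
  (* phiinv: the inverse of the bijection phi : (u_inf, u0] -> [0, oo) *)
  (hphiinv_range : forall t, 0 <= t ->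
     exp (- (beta / gamma) * alpha) < phiinv t <= exp (- (beta / gamma) * Rt))
  (hphiinv_inv : forall t, 0 <= t ->
     phi_of psi (exp (- (beta / gamma) * Rt)) (phiinv t) = t)
  (hphiinv_inv' : forall u, exp (- (beta / gamma) * alpha) < u <= exp (- (beta / gamma) * Rt) ->
     phiinv (phi_of psi (exp (- (beta / gamma) * Rt)) u) = u) :
  let Rf := Rsol beta gamma phiinv in
  is_lim Rf p_infty alpha /\
  alpha = (St + Et + It + Rt) - St * exp ((beta / gamma) * Rt) * exp (- (beta / gamma) * alpha) /\
  (forall s t, 0 <= s -> s < t -> Rf s < Rf t) /\
  (forall t, 0 <= t -> Rt <= Rf t /\ Rf t < alpha).
Proof.
intros Rf.
set (k := beta / gamma). set (u0 := exp (- k * Rt)). set (ui := exp (- k * alpha)).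
fold k u0 ui in hpsi_pos, hpsi_cont_u0, hpsi_C1, hphiinv_range, hphiinv_inv, hphiinv_inv'.
assert (hk : 0 < k) by (unfold k; apply Rdiv_lt_0_compat; lra).
assert (hkk : gamma / beta * k = 1) by (unfold k; field; lra).
assert (hk' : 0 < gamma / beta) by (apply Rdiv_lt_0_compat; lra).
assert (hui : 0 < ui) by apply exp_pos.
assert (hc : forall u, ui < u < u0 -> continuous psi u).
{ intros u Hu. apply (@ex_derive_continuous R_AbsRing R_NormedModule). apply hpsi_C1; lra. }
pose proof (phi_decr psi ui u0 hui hpsi_pos hpsi_cont_u0 hc) as PD.
set (phi := phi_of psi u0) in *.
assert (PD' : forall a b, ui < a < b -> b <= u0 -> phi b < phi a) by exact PD.
assert (PL : forall a b, ui < a <= b -> b <= u0 -> phi b <= phi a).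
{ intros a b Ha Hb. destruct (Rle_lt_or_eq_dec _ _ (proj2 Ha)) as [H|H].
  - left; apply PD'; lra.
  - subst; lra. }
assert (Hdec : forall s t, 0 <= s -> s < t -> phiinv t < phiinv s).
{ intros s t Hs Hst.
  pose proof (hphiinv_range s Hs). pose proof (hphiinv_range t ltac:(lra)).
  pose proof (hphiinv_inv s Hs) as Es. pose proof (hphiinv_inv t ltac:(lra)) as Et'.
  destruct (Rtotal_order (phiinv t) (phiinv s)) as [Hq|[Hq|Hq]]; auto.
  - exfalso. rewrite Hq in Et'. lra.
  - exfalso. pose proof (PD' (phiinv s) (phiinv t) ltac:(lra) ltac:(lra)). lra. }
assert (HRf : forall t, Rf t = - (gamma / beta) * ln (phiinv t)) by reflexivity.
assert (Hb : forall t, 0 <= t -> Rt <= Rf t /\ Rf t < alpha).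
{ intros t Ht. rewrite HRf. pose proof (hphiinv_range t Ht) as [H1 H2].
  assert (L1 : - k * alpha < ln (phiinv t)).
  { unfold ui in H1. rewrite <- (ln_exp (- k * alpha)). apply ln_increasing; [apply exp_pos|lra]. }
  assert (L2 : ln (phiinv t) <= - k * Rt).
  { unfold u0 in H2. rewrite <- (ln_exp (- k * Rt)). destruct H2 as [H2|H2].
    - left. apply ln_increasing; auto. lra.
    - rewrite H2. lra. }
  split; nra. }
split; [|split; [exact halpha_eq|split; [|exact Hb]]].
- apply is_lim_spec. intros eps. simpl.
  set (r := Rmax (alpha - eps / 2) Rt).
  assert (Hr1 : r < alpha). { unfold r. destruct eps; simpl. apply Rmax_lub_lt; lra. }
  assert (Hr2 : Rt <= r) by apply Rmax_r.
  assert (Hr3 : alpha - eps/2 <= r) by apply Rmax_l.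
  set (c := exp (- k * r)).
  assert (Hc1 : ui < c) by (apply exp_increasing; nra).
  assert (Hc2 : c <= u0).
  { destruct Hr2 as [H|H]. - left; apply exp_increasing; nra. - unfold c, u0; rewrite H; lra. }
  exists (Rmax 0 (phi c)). intros t Ht.
  pose proof (Rmax_l 0 (phi c)). pose proof (Rmax_r 0 (phi c)).
  assert (Ht0 : 0 <= t) by lra.
  assert (Hlt : phiinv t < c).
  { destruct (Rlt_or_le (phiinv t) c) as [Hq|Hq]; auto. exfalso.
    pose proof (PL c (phiinv t) ltac:(lra) ltac:(apply hphiinv_range; lra)) as Hw.
    rewrite hphiinv_inv in Hw by lra. lra. }
  pose proof (hphiinv_range t Ht0) as [H1 H2].
  assert (L : ln (phiinv t) < - k * r).
  { unfold c in Hlt. rewrite <- (ln_exp (- k * r)). apply ln_increasing; lra. }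
  assert (r < Rf t) by (rewrite HRf; nra).
  pose proof (Hb t Ht0).
  apply Rabs_lt_between. destruct eps; simpl in *. lra.
- intros s t Hs Hst. rewrite !HRf. pose proof (Hdec s t Hs Hst).
  pose proof (hphiinv_range t ltac:(lra)).
  assert (ln (phiinv t) < ln (phiinv s)) by (apply ln_increasing; lra).
  nra.
Qed.
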